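(* Let $\Lambda$ be a finite-dimensional local algebra over an algebraically closed field $k$ and let $M$ be an indecomposable finitely generated $\Lambda$-module with $\mathrm{End}_\Lambda(M)$ symmetric. Then $M\simeq\Lambda/I$ for some left ideal $I$ of $\Lambda$ such that, with $\Gamma=\{x\in\Lambda: Ix\subseteq I\}$, the algebra $\Gamma/I$ is symmetric.
   Context: Symmetric: the algebra is isomorphic to its $k$-dual as a bimodule. Note $I$ is a two-sided ideal of the subalgebra $\Gamma$. *)

(* Defs.v *)
From HB Require Import structures.
From mathcomp Require Import all_boot all_algebra all_field.
Set Implicit Arguments. Unset Strict Implicit. Unset Printing Implicit Defensive.
Import GRing.Theory.
Local Open Scope ring_scope.

(* The algebra in question is a quotient G/I, where V is a K-vector space     *)
(* carrying a multiplication [mul], G is a subalgebra (subset of V closed     *)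
(* under the operations) and I is a two-sided ideal of G.  G/I is symmetric   *)
(* iff G/I is isomorphic to its K-dual (G/I)^* as a G/I-bimodule, where the   *)
(* bimodule structure on the dual is  (a . phi . b)(y) = phi (b y a).         *)
(* We write out literally such a bimodule isomorphism F : G/I -> (G/I)^*,     *)
(* represented by its lift  f : V -> V -> K,  f x = F (x + I) (a functional   *)
(* on G vanishing on I, extended arbitrarily to V).                           *)
Definition symmetric_quot (K : fieldType) (V : lmodType K)
    (mul : V -> V -> V) (G I : V -> Prop) : Prop :=
  exists f : V -> V -> K,
      (forall c x1 x2 y, f (c *: x1 + x2) y = c * f x1 y + f x2 y) /\
      (forall c x y1 y2, f x (c *: y1 + y2) = c * f x y1 + f x y2) /\
      (* F is well defined on G/I and F x is a functional on G/I *)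
      (forall x y, I x -> G y -> f x y = 0) /\
      (forall x y, G x -> I y -> f x y = 0) /\
      (* F is a morphism of G/I-bimodules *)
      (forall a b x y, G a -> G b -> G x -> G y ->
         f (mul (mul a x) b) y = f x (mul (mul b y) a)) /\
      (forall x, G x -> (forall y, G y -> f x y = 0) -> I x) /\
      (forall g : V -> K,
         (forall c y1 y2, g (c *: y1 + y2) = c * g y1 + g y2) ->
         (forall y, I y -> g y = 0) ->
         exists2 x, G x & forall y, G y -> f x y = g y).

Definition left_ideal (K : fieldType) (A : falgType K) (L : {vspace A}) :=
  (fullv * L <= L)%VS.

Definition maximal_left_ideal (K : fieldType) (A : falgType K)
    (L : {vspace A}) : Prop :=
  [/\ left_ideal L, L != fullv &
      forall L' : {vspace A}, left_ideal L' -> (L <= L')%VS ->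
        L' = L \/ L' = fullv].

Definition local_algebra (K : fieldType) (A : falgType K) : Prop :=
  exists L : {vspace A}, maximal_left_ideal L /\
    forall L' : {vspace A}, maximal_left_ideal L' -> L' = L.

(* Finitely generated left A-modules.  Since A is finite-dimensional, these  *)
(* are the finite-dimensional ones; a module of K-dimension n is given by a   *)
(* unital K-algebra morphism rho : A -> 'M[K]_n acting on column vectors:     *)
(* a . v = rho a *m v.                                                        *)
Definition is_rep (K : fieldType) (A : falgType K) (n : nat)
    (rho : A -> 'M[K]_n) : Prop :=
  [/\ (forall c a b, rho (c *: a + b) = c *: rho a + rho b),
      rho 1 = 1%:M &
      (forall a b, rho (a * b) = rho a *m rho b)].

Definition submodule (K : fieldType) (A : falgType K) (n : nat)
    (rho : A -> 'M[K]_n) (U : {vspace 'cV[K]_n}) : Prop :=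
  forall a v, v \in U -> rho a *m v \in U.

Definition indecomposable (K : fieldType) (A : falgType K) (n : nat)
    (rho : A -> 'M[K]_n) : Prop :=
  (0 < n)%N /\
  forall U W : {vspace 'cV[K]_n}, submodule rho U -> submodule rho W ->
    (U :&: W)%VS = 0%VS -> (U + W)%VS = fullv -> U = 0%VS \/ W = 0%VS.

Definition End_mod (K : fieldType) (A : falgType K) (n : nat)
    (rho : A -> 'M[K]_n) (f : 'M[K]_n) : Prop :=
  forall a, f *m rho a = rho a *m f.

Definition iso_quot (K : fieldType) (A : falgType K) (n : nat)
    (rho : A -> 'M[K]_n) (I : {vspace A}) : Prop :=
  exists phi : A -> 'cV[K]_n,
  [/\ (forall c x y, phi (c *: x + y) = c *: phi x + phi y),
      (forall a x, phi (a * x) = rho a *m phi x),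
      (forall x, phi x = 0 <-> x \in I) &
      (forall v, exists x, phi x = v)].

Definition Gamma_of (K : fieldType) (A : falgType K) (I : {vspace A})
    (x : A) : Prop :=
  (I * <[x]> <= I)%VS.

(* Main.v *)
Require Import Defs.
From HB Require Import structures.
From mathcomp Require Import all_boot all_algebra all_field.
From Stdlib Require Import Classical.
From mathcomp Require Import ring.
Set Implicit Arguments. Unset Strict Implicit. Unset Printing Implicit Defensive.
Import GRing.Theory.
Local Open Scope ring_scope.
Lemma lfunE' (K : fieldType) (aT rT : vectType K) (f : aT -> rT)
  (hf : forall c x y, f (c *: x + y) = c *: f x + f y) : linfun f =1 f.
Proof.
move=> v.
have lf : linear f by move=> a x y; exact: hf.
pose ff : {linear aT -> rT} := HB.pack f (GRing.isLinear.Build _ _ _ _ f lf).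
exact: (lfunE ff v).
Qed.

Lemma vmax (K : fieldType) (T : vectType K) (P : {vspace T} -> Prop)
  (X0 : {vspace T}) : P X0 ->
  exists X, [/\ P X, (X0 <= X)%VS & forall Y, P Y -> (X <= Y)%VS -> Y = X].
Proof.
suff H : forall m (X0 : {vspace T}), (\dim {:T} - \dim X0 < m)%N -> P X0 ->
  exists X, [/\ P X, (X0 <= X)%VS & forall Y, P Y -> (X <= Y)%VS -> Y = X].
  by apply: (H (\dim {:T}).+1); rewrite ltnS leq_subr.
elim=> [|m IH] {}X0 //; rewrite ltnS => hm PX0.
case: (classic (forall Y, P Y -> (X0 <= Y)%VS -> Y = X0)) => [h|].
  by exists X0; split.
move=> /not_all_ex_not [Y hY].
have PY := not_imply_elim _ _ hY.
have hY2 := not_imply_elim2 _ _ hY.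
have sXY := not_imply_elim _ _ hY2.
have nYX := not_imply_elim2 _ _ hY2.
have ltd : (\dim X0 < \dim Y)%N.
  rewrite (ltn_leqif (dimv_leqif_eq sXY)); apply/eqP => e; exact: nYX (esym e).
have [X [PX sYX mX]] : exists X, [/\ P X, (Y <= X)%VS & forall Y0, P Y0 -> (X <= Y0)%VS -> Y0 = X].
  apply: IH PY; have := dimvS (subvf Y); rewrite dimvf => hY'.
  rewrite dimvf in hm *; apply: leq_trans hm; rewrite ltn_sub2l //.
  by apply: leq_trans ltd hY'.
by exists X; split => //; apply: subv_trans sXY sYX.
Qed.

Lemma vmin (K : fieldType) (T : vectType K) (P : {vspace T} -> Prop)
  (X0 : {vspace T}) : P X0 ->
  exists X, [/\ P X, (X <= X0)%VS & forall Y, P Y -> (Y <= X)%VS -> Y = X].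
Proof.
suff H : forall m (X0 : {vspace T}), (\dim X0 < m)%N -> P X0 ->
  exists X, [/\ P X, (X <= X0)%VS & forall Y, P Y -> (Y <= X)%VS -> Y = X].
  by apply: (H (\dim X0).+1).
elim=> [|m IH] {}X0 //; rewrite ltnS => hm PX0.
case: (classic (forall Y, P Y -> (Y <= X0)%VS -> Y = X0)) => [h|].
  by exists X0; split.
move=> /not_all_ex_not [Y hY].
have PY := not_imply_elim _ _ hY.
have hY2 := not_imply_elim2 _ _ hY.
have sYX := not_imply_elim _ _ hY2.
have nYX := not_imply_elim2 _ _ hY2.
have ltd : (\dim Y < \dim X0)%N.
  by rewrite (ltn_leqif (dimv_leqif_eq sYX)); apply/eqP.
have [X [PX sXY mX]] := IH Y (leq_trans ltd hm) PY.
by exists X; split => //; apply: subv_trans sXY sYX.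
Qed.

Lemma vspace_of (K : fieldType) (T : vectType K) (p : T -> Prop) :
  p 0 -> (forall c x y, p x -> p y -> p (c *: x + y)) ->
  exists V : {vspace T}, forall v, v \in V <-> p v.
Proof.
move=> p0 pl.
have P0 : forall v : T, v \in (0%VS : {vspace T}) -> p v.
  by move=> v; rewrite memv0 => /eqP ->.
have [X [PX _ mX]] := @vmax K T (fun X : {vspace T} => forall v, v \in X -> p v) 0%VS P0.
exists X => v; split; first exact: PX.
move=> pv.
have PY : forall u, u \in (X + <[v]>)%VS -> p u.
  move=> u /memv_addP [x xX [w /vlineP [c ->] ->]].
  by rewrite addrC; apply: pl => //; apply: PX.
have := mX _ PY (addvSl _ _) => e.
by rewrite -e; apply: subvP (addvSr X <[v]>) _ (memv_line v).
Qed.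
Lemma left_idealP (K : fieldType) (A : falgType K) (X : {vspace A}) :
  left_ideal X <-> forall a u, u \in X -> a * u \in X.
Proof.
rewrite /left_ideal; split.
  by move=> /prodvP h a u uX; apply: h => //; apply: memvf.
by move=> h; apply/prodvP => a u _ uX; apply: h.
Qed.

Lemma sub_max_ideal (K : fieldType) (A : falgType K) (L : {vspace A}) :
  maximal_left_ideal L -> (forall L', maximal_left_ideal L' -> L' = L) ->
  forall X, left_ideal X -> X != fullv -> (X <= L)%VS.
Proof.
move=> _ uL X lX nX.
have [Y [[lY nY] sXY mY]] := @vmax K A (fun Y => left_ideal Y /\ Y != fullv) X (conj lX nX).
suff -> : L = Y by [].
apply: esym; apply: uL; split => // L' lL' sYL.
case: (eqVneq L' fullv) => [-> | nL']; first by right.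
by left; apply: mY.
Qed.

Lemma one_notin (K : fieldType) (A : falgType K) (L : {vspace A}) :
  maximal_left_ideal L -> 1 \notin L.
Proof.
case=> /left_idealP lL nL _; apply/negP => oL.
move/negP: nL; apply; rewrite eqEsubv subvf /=; apply/subvP => a _.
by rewrite -(mulr1 a); apply: lL.
Qed.

Lemma left_inv_out (K : fieldType) (A : falgType K) (L : {vspace A}) :
  maximal_left_ideal L -> (forall L', maximal_left_ideal L' -> L' = L) ->
  forall u, u \notin L -> exists y, y * u = 1.
Proof.
move=> mL uL u uL'.
pose X := (fullv * <[u]>)%VS.
have lX : left_ideal X.
  apply/left_idealP => a w /memv_cosetP [y _ ->].
  by apply/memv_cosetP; exists (a * y); rewrite ?memvf ?mulrA.
case: (eqVneq X fullv) => [eX | nX].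
  have : (1 : A) \in X by rewrite eX memvf.
  by move=> /memv_cosetP [y _ e]; exists y.
have := sub_max_ideal mL uL lX nX => /subvP sXL.
have : u \in X by apply/memv_cosetP; exists 1; rewrite ?memvf ?mul1r.
by move=> /sXL uL2; rewrite uL2 in uL'.
Qed.
Lemma mx_ext (K : fieldType) n (A B : 'M[K]_n) :
  (forall v : 'cV[K]_n, A *m v = B *m v) -> A = B.
Proof.
move=> h; apply/matrixP => i j.
have := congr1 (fun M : 'cV[K]_n => M i 0) (h (delta_mx j 0)).
by rewrite -!colE !mxE.
Qed.

Lemma unit_inj (K : fieldType) n (A : 'M[K]_n) :
  A \in unitmx <-> (forall v : 'cV[K]_n, A *m v = 0 -> v = 0).
Proof.
split.
  move=> uA v Av.
  by rewrite -(mul1mx v) -(mulVmx uA) -mulmxA Av mulmx0.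
move=> h; rewrite -unitmx_tr -row_free_unit -kermx_eq0.
apply/negP => /negP /rowV0Pn [r /sub_kermxP rA nr].
have : A *m r^T = 0 by rewrite -[A]trmxK -trmx_mul rA trmx0.
move=> /h /(congr1 trmx); rewrite trmxK trmx0 => r0.
by rewrite r0 eqxx in nr.
Qed.

Lemma eigen_exists (k : closedFieldType) n (A : 'M[k]_n) : (0 < n)%N ->
  exists lam, A - lam%:M \notin unitmx.
Proof.
case: n A => [//|n] A _.
have : size (char_poly A) != 1 by rewrite size_char_poly.
move=> /closed_rootP [lam]; rewrite -eigenvalue_root_char => /eigenvalueP [v vA nv].
exists lam; apply/negP => u.
move/negP: nv; apply; apply/eqP.
have e : v *m (A - lam%:M) = 0 by rewrite mulmxBr vA mul_mx_scalar subrr.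
by rewrite -(mulmx1 v) -(mulmxV u) mulmxA e mul0mx.
Qed.

Definition colmx (K : fieldType) n (F : 'cV[K]_n -> 'cV[K]_n) : 'M[K]_n :=
  \matrix_(i, j) (F (delta_mx j 0)) i 0.

Lemma colmxE (K : fieldType) n (F : 'cV[K]_n -> 'cV[K]_n) :
  (forall c x y, F (c *: x + y) = c *: F x + F y) ->
  forall v, colmx F *m v = F v.
Proof.
move=> hF v.
have F0 : F 0 = 0.
  have := hF 1 0 0; rewrite !scale1r addr0 => e.
  by apply: (addrI (F 0)); rewrite addr0 -e.
have Fsum : forall (I : Type) (r : seq I) (g : I -> 'cV[K]_n),
    F (\sum_(i <- r) g i) = \sum_(i <- r) F (g i).
  move=> I r g; elim: r => [|a r IH]; first by rewrite !big_nil F0.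
  by rewrite !big_cons -IH; have := hF 1 (g a) (\sum_(i <- r) g i); rewrite !scale1r.
have FZ : forall c x, F (c *: x) = c *: F x by move=> c x; rewrite -[c *: x]addr0 hF F0 addr0.
apply/matrixP => i j; rewrite (ord1 j) {j}.
rewrite {2}[v]matrix_sum_delta Fsum summxE mxE.

apply: eq_bigr => j _; rewrite big_ord1 FZ [in RHS]mxE /colmx mxE.
by rewrite mulrC.
Qed.
Lemma rho0 (K : fieldType) (A : falgType K) n (rho : A -> 'M[K]_n) :
  is_rep rho -> rho 0 = 0.
Proof.
case=> hl _ _; have := hl 1 0 0; rewrite !scale1r addr0 => e.
by apply: (addrI (rho 0)); rewrite addr0 -e.
Qed.

Lemma rhoD (K : fieldType) (A : falgType K) n (rho : A -> 'M[K]_n) :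
  is_rep rho -> forall a b, rho (a + b) = rho a + rho b.
Proof. by move=> hr a b; case: (hr) => hl _ _; have := hl 1 a b; rewrite !scale1r. Qed.

Lemma rhoZ (K : fieldType) (A : falgType K) n (rho : A -> 'M[K]_n) :
  is_rep rho -> forall c a, rho (c *: a) = c *: rho a.
Proof. by move=> hr c a; case: (hr) => hl _ _; rewrite -[c *: a]addr0 hl rho0 // addr0. Qed.

Lemma rhoM (K : fieldType) (A : falgType K) n (rho : A -> 'M[K]_n) :
  is_rep rho -> forall a b, rho (a * b) = rho a *m rho b.
Proof. by case. Qed.

Lemma rho1 (K : fieldType) (A : falgType K) n (rho : A -> 'M[K]_n) :
  is_rep rho -> rho 1 = 1%:M.
Proof. by case. Qed.

Lemma quot_ann (K : fieldType) (A : falgType K) n (rho : A -> 'M[K]_n) (L : {vspace A}) :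
  is_rep rho -> maximal_left_ideal L -> (forall L', maximal_left_ideal L' -> L' = L) ->
  forall Z Y : {vspace 'cV[K]_n}, submodule rho Z -> submodule rho Y -> (Z <= Y)%VS ->
  (forall W, submodule rho W -> (Z <= W)%VS -> (W <= Y)%VS -> W = Z \/ W = Y) ->
  forall v l, v \in Y -> l \in L -> rho l *m v \in Z.
Proof.
move=> hr mL uL Z Y sZ sY ZY hZY v l vY lL.
case: (boolP (v \in Z)) => vZ; first exact: sZ.
have [W hW] : exists W : {vspace 'cV[K]_n}, forall u, u \in W <->
    exists z l', [/\ z \in Z, l' \in L & u = z + rho l' *m v].
  apply: vspace_of.
    by exists 0, 0; split; rewrite ?mem0v // rho0 // mul0mx addr0.
  move=> c x y [z1 [l1 [z1Z l1L ->]]] [z2 [l2 [z2Z l2L ->]]].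
  exists (c *: z1 + z2), (c *: l1 + l2); split.
  - by apply: memvD => //; apply: memvZ.
  - by apply: memvD => //; apply: memvZ.
  case: (hr) => hl _ _; rewrite hl mulmxDl -scalemxAl scalerDr.
  by rewrite -!addrA; congr (_ + _); rewrite addrCA.
have lLm := mL; case: lLm => /left_idealP lLi _ _.
have sW : submodule rho W.
  move=> a u /hW [z [l' [zZ l'L ->]]]; apply/hW.
  exists (rho a *m z), (a * l'); split; [exact: sZ | exact: lLi | ].
  by rewrite mulmxDr rhoM // mulmxA.
have ZW : (Z <= W)%VS.
  apply/subvP => z zZ; apply/hW; exists z, 0; split => //; first exact: mem0v.
  by rewrite rho0 // mul0mx addr0.
have WY : (W <= Y)%VS.
  apply/subvP => u /hW [z [l' [zZ l'L ->]]].
  by apply: memvD; [apply: (subvP ZY) | apply: sY].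
case: (hZY W sW ZW WY) => eW.
  by rewrite -eW; apply/hW; exists 0, l; split => //; rewrite ?mem0v ?add0r.
have : v \in W by rewrite eW.
move=> /hW [z [l' [zZ l'L ev]]].
pose u := (-1) *: l' + 1.
have uL' : u \notin L.
  apply/negP => uL2; have := memvD uL2 l'L.
  by rewrite /u addrAC scaleN1r addNr add0r; apply/negP; apply: one_notin.
have [y yu] := left_inv_out mL uL uL'.
have ruv : rho u *m v = z.
  case: (hr) => hl h1 _; rewrite /u hl h1 mulmxDl scaleN1r mulNmx mul1mx {2}ev.
  by rewrite addrC addrK.
have : v = rho y *m z by rewrite -ruv mulmxA -rhoM // yu rho1 // mul1mx.
by move=> ev2; rewrite ev2 sZ in vZ.
Qed.

Lemma rho_char (k : closedFieldType) (A : falgType k) n (rho : A -> 'M[k]_n) (L : {vspace A}) :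
  is_rep rho -> (0 < n)%N -> maximal_left_ideal L -> (forall L', maximal_left_ideal L' -> L' = L) ->
  forall a, exists lam, (-lam) *: 1 + a \in L.
Proof.
move=> hr n0 mL uL a.
have [lam hl] := eigen_exists (rho a) n0.
exists lam; apply/negP => /negP /(left_inv_out mL uL) [y e].
have := congr1 rho e; rewrite rhoM // rho1 // => /mulmx1_unit [_].
case: (hr) => hl' h1 _; rewrite hl' h1 scaleNr scalemx1 addrC.
by rewrite (negbTE hl).
Qed.
Fixpoint mxpow (K : fieldType) n (y : 'M[K]_n) (j : nat) : 'M[K]_n :=
  if j is j'.+1 then y *m mxpow y j' else 1%:M.

Lemma mxpowD (K : fieldType) n (y : 'M[K]_n) a b :
  mxpow y (a + b) = mxpow y a *m mxpow y b.
Proof. by elim: a => [|a IH] /=; rewrite ?mul1mx // IH mulmxA. Qed.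

Lemma mxpowS' (K : fieldType) n (y : 'M[K]_n) a :
  mxpow y a.+1 = mxpow y a *m y.
Proof. by rewrite -addn1 mxpowD /= mulmx1. Qed.

Lemma End_pow (K : fieldType) (A : falgType K) n (rho : A -> 'M[K]_n) y j :
  End_mod rho y -> End_mod rho (mxpow y j).
Proof.
move=> hy a; elim: j => [|j IH] /=; first by rewrite mul1mx mulmx1.
by rewrite -mulmxA IH mulmxA hy mulmxA.
Qed.

Lemma Fitting (K : fieldType) (A : falgType K) n (rho : A -> 'M[K]_n) y :
  indecomposable rho -> End_mod rho y -> y \in unitmx \/ exists j, mxpow y j = 0.
Proof.
move=> [n0 hind] hy.
pose kerj j := lker (linfun (mulmx (mxpow y j)) : 'End('cV[K]_n)).
have kerjP : forall j v, (v \in kerj j) = (mxpow y j *m v == 0).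
  by move=> j v; rewrite memv_ker lfunE.
have mono : forall j, (kerj j <= kerj j.+1)%VS.
  by move=> j; apply/subvP => v; rewrite !kerjP /= -mulmxA => /eqP ->; rewrite mulmx0.
have [N eN] : exists N, kerj N = kerj N.+1.
  apply: NNPP => hne.
  have hlt : forall j, (j <= \dim (kerj j))%N.
    elim=> [|j IH] //; apply: leq_ltn_trans IH _.
    rewrite (ltn_leqif (dimv_leqif_eq (mono j))); apply/eqP => e.
    by apply: hne; exists j.
  have := hlt (n * 1).+1; have := dimvS (subvf (kerj (n * 1).+1)).
  rewrite dimvf dim_matrix => h1 h2.
  by have := leq_trans h2 h1; rewrite ltnn.
have stab : forall i, kerj (N + i)%N = kerj N.
  elim=> [|i IH]; first by rewrite ?addn0.
  apply/vspaceP => v; apply/idP/idP; last first.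
    by rewrite -IH addnS; apply: (subvP (mono _)).
  rewrite addnS kerjP mxpowS' -mulmxA -kerjP IH kerjP => h.
  by rewrite eN kerjP mxpowS' -mulmxA.
pose f : 'End('cV[K]_n) := linfun (mulmx (mxpow y N)).
pose U := kerj N; pose W := limg f.
have UW0 : (U :&: W = 0)%VS.
  apply/eqP; rewrite -subv0; apply/subvP => v /memv_capP [vU /memv_imgP [u _ ev]].
  move: vU; rewrite ev memv0 kerjP !lfunE /= mulmxA -mxpowD -kerjP stab kerjP.
  done.
have UWf : (U + W = fullv)%VS.
  apply/eqP; rewrite eqEdim subvf /=.
  have := dimv_sum_cap U W; rewrite UW0 dimv0 addn0 => ->.
  by have := limg_ker_dim f fullv; rewrite capfv => ->.
have sU : submodule rho U.
  move=> a v; rewrite !kerjP => /eqP h; apply/eqP.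
  by rewrite mulmxA (End_pow N hy) -mulmxA h mulmx0.
have sW : submodule rho W.
  move=> a v /memv_imgP [u _ ->]; rewrite !lfunE /= mulmxA -(End_pow N hy) -mulmxA.
  by have := memv_img f (memvf (rho a *m u)); rewrite lfunE.
case: (hind U W sU sW UW0 UWf) => [U0 | W0].
  left; apply/unit_inj => v yv.
  have : v \in kerj N.+1 by rewrite kerjP mxpowS' -mulmxA yv mulmx0.
  by rewrite -eN -/U U0 memv0 => /eqP.
right; exists N; apply: mx_ext => v; rewrite mul0mx.
have : f v \in W by apply: memv_img; apply: memvf.
by rewrite W0 memv0 lfunE => /eqP.
Qed.

Lemma End1 (K : fieldType) (A : falgType K) n (rho : A -> 'M[K]_n) :
  End_mod rho 1%:M.
Proof. by move=> a; rewrite mul1mx mulmx1. Qed.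

Lemma EndL (K : fieldType) (A : falgType K) n (rho : A -> 'M[K]_n) c y z :
  End_mod rho y -> End_mod rho z -> End_mod rho (c *: y + z).
Proof.
by move=> hy hz a; rewrite mulmxDl mulmxDr -scalemxAl -scalemxAr hy hz.
Qed.

Lemma EndM (K : fieldType) (A : falgType K) n (rho : A -> 'M[K]_n) y z :
  End_mod rho y -> End_mod rho z -> End_mod rho (y *m z).
Proof. by move=> hy hz a; rewrite -mulmxA hz mulmxA hy mulmxA. Qed.

Lemma EndS (K : fieldType) (A : falgType K) n (rho : A -> 'M[K]_n) c :
  End_mod rho c%:M.
Proof. by move=> a; rewrite mul_scalar_mx mul_mx_scalar. Qed.

Lemma EndB (K : fieldType) (A : falgType K) n (rho : A -> 'M[K]_n) y z :
  End_mod rho y -> End_mod rho z -> End_mod rho (y - z).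
Proof. by move=> hy hz; rewrite -scaleN1r addrC; apply: EndL. Qed.

Lemma EndV (K : fieldType) (A : falgType K) n (rho : A -> 'M[K]_n) y :
  End_mod rho y -> y \in unitmx -> End_mod rho (invmx y).
Proof.
move=> hy uy a.
rewrite -[invmx y *m rho a]mulmx1 -(mulmxV uy) !mulmxA -[invmx y *m _ *m y]mulmxA.
by rewrite -hy mulmxA (mulVmx uy) mul1mx.
Qed.

Lemma nil_1B (K : fieldType) n (y : 'M[K]_n) j : mxpow y j = 0 -> (1%:M - y) \in unitmx.
Proof.
move=> hj; apply/unit_inj => v.
rewrite mulmxBl mul1mx => /eqP; rewrite subr_eq0 => /eqP ev.
have : forall i, mxpow y i *m v = v.
  by elim=> [|i IH] /=; rewrite ?mul1mx // -mulmxA IH.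
by move=> /(_ j); rewrite hj mul0mx.
Qed.

Lemma nonunit_1B (K : fieldType) (A : falgType K) n (rho : A -> 'M[K]_n) y :
  indecomposable rho -> End_mod rho y -> y \notin unitmx -> (1%:M - y) \in unitmx.
Proof.
move=> hi hy nu; case: (Fitting hi hy) => [u | [j hj]]; first by rewrite u in nu.
exact: nil_1B hj.
Qed.

Lemma nonunit_add (K : fieldType) (A : falgType K) n (rho : A -> 'M[K]_n) a b :
  indecomposable rho -> End_mod rho a -> End_mod rho b ->
  a \notin unitmx -> b \notin unitmx -> a + b \notin unitmx.
Proof.
move=> hi ha hb na nb; apply/negP => u.
pose c := invmx (a + b).
have hab : End_mod rho (a + b) by rewrite -[a]scale1r; apply: EndL.
have hc : End_mod rho c by apply: EndV.
have nca : c *m a \notin unitmx by rewrite unitmx_mul (negbTE na) andbF.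
have := nonunit_1B hi (EndM hc ha) nca.
have -> : 1%:M - c *m a = c *m b.
  by rewrite -(mulVmx u) mulmxDr addrC addKr.
by rewrite unitmx_mul (negbTE nb) andbF.
Qed.

Lemma colmx_lin2 (K : fieldType) n (c0 : 'cV[K]_n) (g1 g2 : 'cV[K]_n -> K) a b :
  colmx (fun v => (a * g1 v + b * g2 v) *: c0) =
  a *: colmx (fun v => g1 v *: c0) + b *: colmx (fun v => g2 v *: c0).
Proof. by apply/matrixP => i j; rewrite /colmx !mxE mulrDl !mulrA. Qed.

Lemma submodule0 (K : fieldType) (A : falgType K) n (rho : A -> 'M[K]_n) :
  submodule rho 0%VS.
Proof. by move=> a v; rewrite !memv0 => /eqP ->; rewrite mulmx0. Qed.

Lemma submodulef (K : fieldType) (A : falgType K) n (rho : A -> 'M[K]_n) :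
  submodule rho fullv.
Proof. by move=> a v _; apply: memvf. Qed.

Lemma fullv_neq0 (K : fieldType) n : (0 < n)%N -> (fullv : {vspace 'cV[K]_n}) != 0%VS.
Proof.
by move=> n0; rewrite -dimv_eq0 dimvf dim_matrix -lt0n; case: n n0.
Qed.

Lemma exists_out (K : fieldType) (T : vectType K) (Z : {vspace T}) :
  Z != fullv -> exists m, m \notin Z.
Proof.
move=> nZ; apply: NNPP => h; move/negP: nZ; apply.
rewrite eqEsubv subvf /=; apply/subvP => v _.
by apply: NNPP => hv; apply: h; exists v; apply/negP.
Qed.

Lemma cyclic_mod (k : closedFieldType) (A : falgType k) n (rho : A -> 'M[k]_n) :
  local_algebra A -> is_rep rho -> indecomposable rho ->
  symmetric_quot (@mulmx k n n n) (End_mod rho) (fun f => f = 0) ->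
  exists m : 'cV[k]_n, forall v, exists x, rho x *m m = v.
Proof.
move=> [L [mL uL]] hr hi [f [fl1 [fl2 [fv1 [fv2 [fbi [finj fsurj]]]]]]].
have n0 : (0 < n)%N by case: hi.
have [S [[sS nS] _ mS]] := @vmin k _ (fun S => submodule rho S /\ S != 0%VS) fullv
   (conj (@submodulef k A n rho) (fullv_neq0 k n0)).
have annS : forall v l, v \in S -> l \in L -> rho l *m v = 0.
  move=> v l vS lL; apply/eqP; rewrite -memv0.
  apply: (quot_ann hr mL uL (submodule0 rho) sS (sub0v S)) => // W sW _ WS.
  case: (eqVneq W 0%VS) => [-> | nW]; first by left.
  by right; apply: mS.
pose w := vpick S.
have wS : w \in S by apply: memv_pick.
have nw : w != 0 by rewrite vpick0.
have [Qv hQ] : exists Qv : {vspace 'cV[k]_n}, forall c, c \in Qv <->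
    (forall l, l \in L -> rho l *m c = 0).
  apply: vspace_of; first by move=> l _; rewrite mulmx0.
  move=> c x y hx hy l lL; rewrite mulmxDr -scalemxAr hx // hy //.
  by rewrite scaler0 addr0.
have stabQ : forall y c, End_mod rho y -> c \in Qv -> y *m c \in Qv.
  move=> y c hy /hQ hc; apply/hQ => l lL.
  by rewrite mulmxA -hy -mulmxA hc // mulmx0.
have nQ : Qv != 0%VS.
  apply/negP => /eqP Q0; move/negP: nw; apply.
  by rewrite -memv0 -Q0; apply/hQ => l lL; apply: annS.
have [X [[nX [XQ stX]] _ mX]] := @vmin k _ (fun X => X != 0%VS /\ (X <= Qv)%VS /\
   (forall y v, End_mod rho y -> v \in X -> y *m v \in X)) Qv
   (conj nQ (conj (subvv Qv) stabQ)).
pose c0 := vpick X.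
have c0X : c0 \in X by apply: memv_pick.
have nc0 : c0 != 0 by rewrite vpick0.
have c0Q : c0 \in Qv by apply: (subvP XQ).
have zero_nu : (0 : 'M[k]_n) \notin unitmx.
  apply/negP => /unit_inj h; move/negP: nw; apply; apply/eqP; apply: h.
  by rewrite mul0mx.
have End0 : End_mod rho 0 by move=> a; rewrite mul0mx mulmx0.
have [NC hNC] : exists NC : {vspace 'cV[k]_n}, forall u, u \in NC <->
    exists y, [/\ End_mod rho y, y \notin unitmx & u = y *m c0].
  apply: vspace_of; first by exists 0; rewrite mul0mx.
  move=> c x z [y1 [h1 n1 ->]] [y2 [h2 n2 ->]].
  exists (c *: y1 + y2); split; first exact: EndL.
    have hcy : End_mod rho (c *: y1) by rewrite -[c *: y1]addr0; apply: EndL.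
    apply: (nonunit_add hi hcy h2) => //.
    by rewrite -mul_scalar_mx unitmx_mul (negbTE n1) andbF.
  by rewrite mulmxDl scalemxAl.
have NCX : (NC <= X)%VS.
  by apply/subvP => u /hNC [y [hy _ ->]]; apply: stX.
have NC0 : NC = 0%VS.
  case: (eqVneq NC 0%VS) => // nNC.
  have PNC : NC != 0%VS /\ (NC <= Qv)%VS /\
      (forall y v, End_mod rho y -> v \in NC -> y *m v \in NC).
    split => //; split; first exact: subv_trans NCX XQ.
    move=> y v hy /hNC [z [hz nz ->]]; apply/hNC; exists (y *m z); split.
    - exact: EndM.
    - by rewrite unitmx_mul (negbTE nz) andbF.
    - by rewrite mulmxA.
  have eX := mX _ PNC NCX.
  have : c0 \in NC by rewrite eX.
  move=> /hNC [y [hy ny ec]].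
  have := nonunit_1B hi hy ny => /unit_inj h.
  case/negP: nc0; apply/eqP; apply: h.
  by rewrite mulmxBl mul1mx -ec subrr.
have kill : forall y, End_mod rho y -> y \notin unitmx -> y *m c0 = 0.
  move=> y hy ny; apply/eqP; rewrite -memv0 -NC0; apply/hNC; exists y; split => //.
have eig : forall y, End_mod rho y -> exists lam, y *m c0 = lam *: c0.
  move=> y hy; have [lam hl] := eigen_exists y n0.
  exists lam; apply/eqP; rewrite -subr_eq0 -mul_scalar_mx -mulmxBl.
  by apply/eqP; apply: kill hl; apply: EndB => //; apply: EndS.
have chi := rho_char hr n0 mL uL.
have rhoE : forall a lam, (-lam) *: 1 + a \in L -> forall v : 'cV[k]_n,
    rho a *m v = rho ((-lam) *: 1 + a) *m v + lam *: v.
  move=> a lam _ v; case: (hr) => hl h1 _.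
  by rewrite hl h1 mulmxDl scaleNr mulNmx -scalemxAl mul1mx addrAC addNr add0r.
have f0 : forall Y, End_mod rho Y -> f 0 Y = 0 by move=> Y hY; apply: fv1.
have key : forall phi : 'cV[k]_n -> k,
    (forall c x y, phi (c *: x + y) = c * phi x + phi y) ->
    (forall l v, l \in L -> phi (rho l *m v) = 0) ->
    End_mod rho (colmx (fun v => phi v *: c0)) /\
    (f (colmx (fun v => phi v *: c0)) 1%:M = 0 -> forall v, phi v = 0).
  move=> phi hphi hL.
  pose h := colmx (fun v => phi v *: c0).
  have hE : forall v, h *m v = phi v *: c0.
    by apply: colmxE => c x y; rewrite hphi scalerDl scalerA.
  have phiD : forall x y, phi (x + y) = phi x + phi y.
    by move=> x y; have := hphi 1 x y; rewrite scale1r mul1r.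
  have phi0 : phi 0 = 0.
    have := hphi 1 0 0; rewrite scale1r addr0 mul1r => e.
    by apply: (addrI (phi 0)); rewrite addr0 -e.
  have phiZ : forall c x, phi (c *: x) = c * phi x.
    by move=> c x; have := hphi c x 0; rewrite !addr0 phi0 addr0.
  have hEnd : End_mod rho h.
    move=> a; apply: mx_ext => v; rewrite -!mulmxA !hE.
    have [lam hl] := chi a.
    rewrite (rhoE _ _ hl v) phiD phiZ hL // add0r -scalemxAr (rhoE _ _ hl c0).
    by rewrite (proj1 (hQ c0) c0Q) // add0r scalerA mulrC.
  split => // ht v.
  have hy : forall Y, End_mod rho Y -> f h Y = 0.
    move=> Y hY.
    have e1 : f h Y = f (Y *m h *m 1%:M) 1%:M.
      by rewrite fbi //; [rewrite !mul1mx | apply: End1 | apply: End1].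
    have [lam hl] := eig Y hY.
    have e2 : Y *m h *m 1%:M = lam *: h + 0.
      rewrite mulmx1 addr0; apply: mx_ext => u.
      by rewrite -mulmxA hE -scalemxAr hl scalerA -scalemxAl hE scalerA mulrC.
    by rewrite e1 e2 fl1 ht f0 ?mulr0 ?addr0 //; apply: End1.
  have h0 := finj h hEnd hy.
  have := hE v; rewrite h0 mul0mx => /esym /eqP; rewrite scaler_eq0 (negbTE nc0) orbF.
  by move/eqP.
have maxann : forall Z : {vspace 'cV[k]_n}, submodule rho Z -> Z != fullv ->
    (forall Y, submodule rho Y /\ Y != fullv -> (Z <= Y)%VS -> Y = Z) ->
    forall v l, l \in L -> rho l *m v \in Z.
  move=> Z sZ nZ mZ v l lL.
  apply: (quot_ann hr mL uL sZ (submodulef rho) (subvf Z)) => //; last exact: memvf.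
  move=> W sW ZW _; case: (eqVneq W fullv) => [-> | nW]; first by right.
  by left; apply: mZ.
have phiof : forall Z : {vspace 'cV[k]_n}, forall m, m \notin Z ->
    exists phi : 'cV[k]_n -> k, [/\ forall c x y, phi (c *: x + y) = c * phi x + phi y,
      forall z, z \in Z -> phi z = 0 & phi m != 0].
  move=> Z m mZ.
  have : m - projv Z m != 0.
    by apply/negP => /eqP /subr0_eq e; move/negP: mZ; apply; rewrite e memv_proj.
  move=> /matrix0Pn [i [j nij]].
  exists (fun v => (v - projv Z v) i j); split => //.
  - by move=> c x y; rewrite linearD linearZ /= !mxE opprD addrACA -mulrBr.
  - by move=> z zZ; rewrite projv_id // subrr mxE.
have f0ne : (0%VS : {vspace 'cV[k]_n}) != fullv by rewrite eq_sym fullv_neq0.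
have [Z [[sZ nZ] _ maxZ]] := @vmax k _ (fun Z => submodule rho Z /\ Z != fullv) 0%VS
  (conj (submodule0 rho) f0ne).
have [m mZ] := exists_out nZ.
exists m; apply: NNPP => hncyc.
have [C hC] : exists C : {vspace 'cV[k]_n}, forall u, u \in C <-> exists x, rho x *m m = u.
  apply: vspace_of; first by exists 0; rewrite rho0 // mul0mx.
  move=> c x y [a <-] [b <-]; exists (c *: a + b).
  by case: (hr) => hl _ _; rewrite hl mulmxDl scalemxAl.
have sC : submodule rho C.
  by move=> a u /hC [x <-]; apply/hC; exists (a * x); rewrite rhoM // mulmxA.
have nC : C != fullv.
  apply/negP => /eqP eC; apply: hncyc => v.
  by apply/hC; rewrite eC memvf.
have [Z' [[sZ' nZ'] CZ' mZ']] := @vmax k _ (fun Z => submodule rho Z /\ Z != fullv) C (conj sC nC).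
have mZ'' : m \in Z'.
  by apply: (subvP CZ'); apply/hC; exists 1; rewrite rho1 // mul1mx.
have [m' [m'Z m'Z']] : exists m', m' \in Z /\ m' \notin Z'.
  apply: NNPP => h.
  have ZZ' : (Z <= Z')%VS.
    apply/subvP => u uZ; apply: NNPP => hu; apply: h; exists u; split => //.
    by apply/negP.
  have := maxZ _ (conj sZ' nZ') ZZ' => e.
  by move: mZ''; rewrite e (negbTE mZ).
have [phi [lphi kphi nphi]] := phiof Z m mZ.
have [phi' [lphi' kphi' nphi']] := phiof Z' m' m'Z'.
have LZ : forall l v, l \in L -> phi (rho l *m v) = 0.
  by move=> l v lL; apply: kphi; apply: maxann.
have LZ' : forall l v, l \in L -> phi' (rho l *m v) = 0.
  by move=> l v lL; apply: kphi'; apply: maxann.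
have [E1 _] := key phi lphi LZ.
have [E2 inj2] := key phi' lphi' LZ'.
pose t := f (colmx (fun v => phi v *: c0)) 1%:M.
pose t' := f (colmx (fun v => phi' v *: c0)) 1%:M.
pose psi := fun v => t' * phi v + (- t) * phi' v.
have lpsi : forall c x y, psi (c *: x + y) = c * psi x + psi y.
  move=> c x y; rewrite /psi lphi lphi'.
  ring.
have Lpsi : forall l v, l \in L -> psi (rho l *m v) = 0.
  by move=> l v lL; rewrite /psi LZ // LZ' // !mulr0 addr0.
have [_ injpsi] := key psi lpsi Lpsi.
have tpsi : f (colmx (fun v => psi v *: c0)) 1%:M = 0.
  rewrite /psi colmx_lin2 -[X in f (_ + X)]addr0 fl1 fl1 f0; last exact: End1.
  by rewrite -/t -/t' addr0 mulrC mulNr addrN.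
have := injpsi tpsi m; rewrite /psi (kphi' m mZ'') mulr0 addr0 => /eqP.
rewrite mulf_eq0 (negbTE nphi) orbF => /eqP t'0.
have := inj2 t'0 m'; apply/eqP; exact: nphi'.
Qed.
Lemma GammaP (K : fieldType) (A : falgType K) (I : {vspace A}) x :
  Gamma_of I x <-> forall i, i \in I -> i * x \in I.
Proof.
rewrite /Gamma_of; split.
  by move=> /prodvP h i iI; apply: h => //; apply: memv_line.
move=> h; apply/prodvP => u v uI /vlineP [c ->].
by rewrite -scalerAr; apply: memvZ; apply: h.
Qed.

Lemma rhoB (K : fieldType) (A : falgType K) n (rho : A -> 'M[K]_n) :
  is_rep rho -> forall a b, rho (a - b) = rho a - rho b.
Proof.
move=> hr a b; rewrite rhoD // -scaleN1r rhoZ // scaleN1r //.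
Qed.

Lemma sym_from_cyclic (K : fieldType) (A : falgType K) n (rho : A -> 'M[K]_n) (m : 'cV[K]_n) :
  is_rep rho ->
  symmetric_quot (@mulmx K n n n) (End_mod rho) (fun f => f = 0) ->
  (forall v, exists x, rho x *m m = v) ->
  exists I : {vspace A},
    [/\ left_ideal I, iso_quot rho I &
        symmetric_quot (@GRing.mul A) (Gamma_of I) (fun x => x \in I)].
Proof.
move=> hr [f [fl1 [fl2 [fv1 [fv2 [fbi [finj fsurj]]]]]]] hm.
have evlin : forall c x y, rho (c *: x + y) *m m = c *: (rho x *m m) + rho y *m m.
  by move=> c x y; case: (hr) => hl _ _; rewrite hl mulmxDl scalemxAl.
have [I hI] : exists I : {vspace A}, forall x, x \in I <-> rho x *m m = 0.
  apply: vspace_of; first by rewrite rho0 // mul0mx.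
  by move=> c x y hx hy; rewrite evlin hx hy scaler0 addr0.
pose ev : 'Hom(A, 'cV[K]_n) := linfun (fun x => rho x *m m).
have evE : forall x, ev x = rho x *m m by apply: lfunE'.
pose s := fun v => (ev^-1)%VF v.
have sK : forall v, rho (s v) *m m = v.
  move=> v; rewrite -evE /s limg_lfunVK //.
  by have [x <-] := hm v; rewrite -evE; apply: memv_img; apply: memvf.
have slin : forall c x y, s (c *: x + y) = c *: s x + s y.
  by move=> c x y; rewrite /s linearP.
have lI : left_ideal I.
  by apply/left_idealP => a u /hI h; apply/hI; rewrite rhoM // -mulmxA h mulmx0.
have lIP := proj1 (left_idealP I) lI.
have Imem : forall u b, rho u *m m = rho b *m m -> u - b \in I.
  by move=> u b e; apply/hI; rewrite rhoB // mulmxBl e subrr.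
pose Psi := fun x => colmx (fun v => rho (s v * x) *m m).
have PsiE : forall x v, Psi x *m v = rho (s v * x) *m m.
  move=> x; apply: colmxE => c u w.
  by rewrite slin mulrDl -scalerAl evlin.
have Gmx : forall x u b, Gamma_of I x -> rho u *m m = rho b *m m ->
    rho (u * x) *m m = rho (b * x) *m m.
  move=> x u b /GammaP gx e.
  have := gx _ (Imem u b e); rewrite mulrBl => /hI.
  by rewrite rhoB // mulmxBl => /eqP; rewrite subr_eq0 => /eqP.
have PsiEnd : forall x, Gamma_of I x -> End_mod rho (Psi x).
  move=> x gx a; apply: mx_ext => v; rewrite -!mulmxA !PsiE.
  rewrite (Gmx x (s (rho a *m v)) (a * s v)) //; first by rewrite -mulrA rhoM // mulmxA.
  by rewrite sK rhoM // -mulmxA sK.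
have Psim : forall x b, Gamma_of I x -> Psi x *m (rho b *m m) = rho (b * x) *m m.
  by move=> x b gx; rewrite PsiE; apply: Gmx; rewrite // sK.
have Psim1 : forall x, Gamma_of I x -> Psi x *m m = rho x *m m.
  by move=> x gx; have := Psim x 1 gx; rewrite rho1 // mul1mx mul1r.
have EndEq : forall Y1 Y2, End_mod rho Y1 -> End_mod rho Y2 -> Y1 *m m = Y2 *m m -> Y1 = Y2.
  move=> Y1 Y2 h1 h2 e; apply: mx_ext => v; have [x <-] := hm v.
  by rewrite !mulmxA h1 h2 -!mulmxA e.
have GM : forall a b, Gamma_of I a -> Gamma_of I b -> Gamma_of I (a * b).
  move=> a b /GammaP ga /GammaP gb; apply/GammaP => i iI.
  by rewrite mulrA; apply: gb; apply: ga.
have PsiSurj : forall Y, End_mod rho Y -> exists2 x, Gamma_of I x & Psi x = Y.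
  move=> Y hY; have [x ex] := hm (Y *m m).
  have gx : Gamma_of I x.
    apply/GammaP => i /hI iI; apply/hI.
    by rewrite rhoM // -mulmxA ex mulmxA -hY -mulmxA iI mulmx0.
  by exists x => //; apply: EndEq => //; [apply: PsiEnd | rewrite Psim1].
have PsiMul : forall a x, Gamma_of I a -> Gamma_of I x -> Psi (a * x) = Psi x *m Psi a.
  move=> a x ga gx; apply: EndEq.
  - by apply: PsiEnd; apply: GM.
  - by apply: EndM; apply: PsiEnd.
  rewrite Psim1; last exact: GM.
  have e : Psi x *m (Psi a *m m) = rho (a * x) *m m by rewrite Psim1 // Psim.
  by rewrite -e mulmxA.
have PsiLin : forall c x y, Psi (c *: x + y) = c *: Psi x + Psi y.
  move=> c x y; apply: mx_ext => v.
  by rewrite mulmxDl -scalemxAl !PsiE mulrDr -scalerAr evlin.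
have PsiI : forall x, x \in I -> Psi x = 0.
  move=> x xI; apply: mx_ext => v; rewrite PsiE mul0mx; apply/hI.
  exact: lIP.
exists I; split => //.
  exists (fun x => rho x *m m); split => //.
  - by move=> a x; rewrite rhoM // mulmxA.
  - by move=> x; split => /hI.
exists (fun x y => f (Psi x) (Psi y)); split.
  by move=> c x1 x2 y; rewrite PsiLin fl1.
split.
  by move=> c x y1 y2; rewrite PsiLin fl2.
split.
  by move=> x y xI gy; apply: fv1; [apply: PsiI | apply: PsiEnd].
split.
  by move=> x y gx yI; apply: fv2; [apply: PsiEnd | apply: PsiI].
split.
  move=> a b x y ga gb gx gy.
  have gax : Gamma_of I (a * x) by apply: GM.
  have gby : Gamma_of I (b * y) by apply: GM.
  have e1 : Psi (a * x * b) = Psi b *m Psi x *m Psi a.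
    by rewrite PsiMul // PsiMul // mulmxA.
  have e2 : Psi (b * y * a) = Psi a *m Psi y *m Psi b.
    by rewrite PsiMul // PsiMul // mulmxA.
  by rewrite e1 e2; apply: fbi; apply: PsiEnd.
split.
  move=> x gx h; apply/hI; rewrite -Psim1 //.
  have -> : Psi x = 0; last by rewrite mul0mx.
  apply: finj; first exact: PsiEnd.
  by move=> Y hY; have [y gy <-] := PsiSurj Y hY; apply: h.
move=> g hg gI.
have g0 : forall u, u \in I -> g u = 0 by [].
have gD : forall u v, g (u + v) = g u + g v.
  by move=> u v; have := hg 1 u v; rewrite scale1r mul1r.
have glin : forall c (y1 y2 : 'M[K]_n), g (s ((c *: y1 + y2) *m m)) = c * g (s (y1 *m m)) + g (s (y2 *m m)).
  by move=> c y1 y2; rewrite mulmxDl -scalemxAl slin hg.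
have gz : forall y : 'M[K]_n, y = 0 -> g (s (y *m m)) = 0.
  move=> y ->; rewrite mul0mx; apply: gI; apply/hI.
  by rewrite sK.
have [X hX fX] := fsurj (fun Y => g (s (Y *m m))) glin gz.
have [x gx ex] := PsiSurj X hX.
exists x => // y gy; rewrite ex fX; last exact: PsiEnd.
rewrite /= Psim1 //.
have e : s (rho y *m m) = (s (rho y *m m) - y) + y by rewrite subrK.
by rewrite e gD gI ?add0r //; apply: Imem; rewrite sK.
Qed.

Unset Implicit Arguments.
Set Strict Implicit.

Theorem corollary5p3 (k : closedFieldType) (Lambda : falgType k)
    (n : nat) (rho : Lambda -> 'M[k]_n) :
  local_algebra Lambda ->
  is_rep rho ->
  indecomposable rho ->
  symmetric_quot (@mulmx k n n n) (End_mod rho) (fun f => f = 0) ->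
  exists I : {vspace Lambda},
    [/\ left_ideal I, iso_quot rho I &
        symmetric_quot (@GRing.mul Lambda) (Gamma_of I) (fun x => x \in I)].
Proof.
move=> loc hr hi hs.
have [m hm] := cyclic_mod loc hr hi hs.
exact: (sym_from_cyclic hr hs hm).
Qed.
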